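(* Let $\varepsilon>0$ and $\delta\in(0,1)$. Define \[ n_1 = 1+\left\lfloor\frac{1}{\varepsilon}\ln\left(\frac{e^{\varepsilon}+2\delta-1}{(e^{\varepsilon}+1)\delta}\right)\right\rfloor, \] define $\pi_{\mathrm{opt}}(n)=\frac{e^{n\varepsilon}-1}{e^{\varepsilon}-1}\cdot\delta$ for integers $0\le n\le n_1$, and \[ n_2 = n_1 + \left\lfloor\frac{1}{\varepsilon}\ln\left(1+\frac{e^{\varepsilon}-1}{\delta}\left(1-\pi_{\mathrm{opt}}(n_1)\right)\right)\right\rfloor . \] For integers $n$ with $n_1<n\le n_2$, writing $m=n-n_1$, define \[ \pi_{\mathrm{opt}}(n)=\left(1-e^{-m\varepsilon}\right)\left(1+\frac{\delta}{e^{\varepsilon}-1}\right)+e^{-m\varepsilon}\pi_{\mathrm{opt}}(n_1), \] and define $\pi_{\mathrm{opt}}(n)=1$ for $n>n_2$. Then $\pi_{\mathrm{opt}}$ is an optimal partition selection primitive for $(\varepsilon,\delta)$-differential privacy.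
   Context: $\mathbb{N}=\{0,1,2,\dots\}$. A partition selection primitive is a function $\pi:\mathbb{N}\to[0,1]$ with $\pi(0)=0$; it is interpreted as: count the number $n$ of users in a partition and release (keep) the partition with probability $\pi(n)$, drop it otherwise. Let $\rho_\pi(n)$ be the random variable in $\{\mathrm{drop},\mathrm{keep}\}$ equal to keep with probability $\pi(n)$ and drop with probability $1-\pi(n)$. The primitive $\pi$ is $(\varepsilon,\delta)$-differentially private if for all $n,n'\in\mathbb{N}$ with $|n-n'|=1$ (adding or removing one user) and all $S\subseteq\{\mathrm{drop},\mathrm{keep}\}$, $\Pr[\rho_\pi(n)\in S]\le e^{\varepsilon}\Pr[\rho_\pi(n')\in S]+\delta$. A primitive $\pi_{\mathrm{opt}}$ is optimal for $(\varepsilon,\delta)$-DP if it is $(\varepsilon,\delta)$-differentially private and for every $(\varepsilon,\delta)$-differentially private partition selection primitive $\pi$ and every $n\in\mathbb{N}$, $\pi(n)\le\pi_{\mathrm{opt}}(n)$. *)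

(* Defs.v *)
From Stdlib Require Import Reals ZArith Lra.
Open Scope R_scope.

Inductive outcome := drop | keep.

Definition is_primitive (pi : nat -> R) : Prop :=
  pi 0%nat = 0 /\ forall n, 0 <= pi n <= 1.

Definition prob_in (pi : nat -> R) (n : nat) (S : outcome -> bool) : R :=
  (if S keep then pi n else 0) + (if S drop then 1 - pi n else 0).

Definition is_dp (eps delta : R) (pi : nat -> R) : Prop :=
  forall n n' : nat, (n' = S n \/ n = S n') ->
  forall S : outcome -> bool,
    prob_in pi n S <= exp eps * prob_in pi n' S + delta.

Definition is_optimal (eps delta : R) (pi_opt : nat -> R) : Prop :=
  is_primitive pi_opt /\ is_dp eps delta pi_opt /\
  forall pi : nat -> R, is_primitive pi -> is_dp eps delta pi ->
    forall n : nat, pi n <= pi_opt n.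

(* floor, via Stdlib's Int_part (= up r - 1 = floor r) *)
Definition floorZ (r : R) : Z := Int_part r.

Definition n1 (eps delta : R) : Z :=
  (1 + floorZ ((1 / eps) *
     ln ((exp eps + 2 * delta - 1) / ((exp eps + 1) * delta))))%Z.

Definition pi_lin (eps delta : R) (k : Z) : R :=
  (exp (IZR k * eps) - 1) / (exp eps - 1) * delta.

Definition n2 (eps delta : R) : Z :=
  (n1 eps delta + floorZ ((1 / eps) *
     ln (1 + (exp eps - 1) / delta * (1 - pi_lin eps delta (n1 eps delta)))))%Z.

Definition pi_opt (eps delta : R) (n : nat) : R :=
  let z := Z.of_nat n in
  if (z <=? n1 eps delta)%Z then pi_lin eps delta z
  else if (z <=? n2 eps delta)%Z then
    let m := IZR (z - n1 eps delta) in
    (1 - exp (- (m * eps))) * (1 + delta / (exp eps - 1))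
    + exp (- (m * eps)) * pi_lin eps delta (n1 eps delta)
  else 1.

(* Main.v *)
Require Import Defs.
From Stdlib Require Import Reals.
From Stdlib Require Import ZArith Lra Lia Psatz.
Open Scope R_scope.

Definition gf (a d p : R) := 1 - (1 - p - d) / a.
Definition ff (a d p : R) := Rmin (Rmin (a * p + d) (gf a d p)) 1.

Lemma exp_le (x y : R) : x <= y -> exp x <= exp y.
Proof. intros [H|H]; [left; apply exp_increasing; exact H| subst; lra]. Qed.

Lemma ff_lin a d p : 1 < a -> 0 < d < 1 -> p * (a + 1) <= 1 - d -> ff a d p = a * p + d.
Proof.
  intros Ha Hd Hp. unfold ff, gf.
  assert (H1 : a * p + d <= 1 - (1 - p - d) / a).
  { apply Rmult_le_reg_r with a; [lra|].
    replace ((1 - (1 - p - d) / a) * a) with (a - 1 + p + d) by (field; lra).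
    assert (0 <= (a - 1) * (1 - d - p * (a + 1))) by (apply Rmult_le_pos; lra). nra. }
  assert (H2 : a * p + d <= 1).
  { destruct (Rle_dec 0 p); nra. }
  rewrite (Rmin_left _ _ H1). apply Rmin_left; exact H2.
Qed.

Lemma ff_g_le a d p : 1 < a -> 0 < d < 1 -> 1 - d <= p * (a + 1) -> gf a d p <= a * p + d.
Proof.
  intros Ha Hd Hp. unfold gf.
  apply Rmult_le_reg_r with a; [lra|].
  replace ((1 - (1 - p - d) / a) * a) with (a - 1 + p + d) by (field; lra).
  assert (0 <= (a - 1) * (p * (a + 1) - (1 - d))) by (apply Rmult_le_pos; lra). nra.
Qed.

Lemma ff_g a d p : 1 < a -> 0 < d < 1 -> 1 - d <= p * (a + 1) -> gf a d p <= 1 ->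
  ff a d p = gf a d p.
Proof.
  intros Ha Hd Hp Hg. unfold ff.
  rewrite (Rmin_right _ _ (ff_g_le a d p Ha Hd Hp)). apply Rmin_left; exact Hg.
Qed.

Lemma ff_1 a d p : 1 < a -> 0 < d < 1 -> 1 - d <= p * (a + 1) -> 1 <= gf a d p ->
  ff a d p = 1.
Proof.
  intros Ha Hd Hp Hg. unfold ff.
  rewrite (Rmin_right _ _ (ff_g_le a d p Ha Hd Hp)). apply Rmin_right; exact Hg.
Qed.

Lemma exp_gt1 eps : 0 < eps -> 1 < exp eps.
Proof. intros. rewrite <- exp_0. apply exp_increasing; lra. Qed.

Lemma lin_succ eps delta k : 0 < eps ->
  pi_lin eps delta (k + 1) = exp eps * pi_lin eps delta k + delta.
Proof.
  intros He. pose proof (exp_gt1 eps He). unfold pi_lin.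
  rewrite plus_IZR, Rmult_plus_distr_r, exp_plus, Rmult_1_l. field. lra.
Qed.

Definition LL eps delta :=
  (1 / eps) * ln ((exp eps + 2 * delta - 1) / ((exp eps + 1) * delta)).

Lemma lin_thr eps delta k : 0 < eps -> 0 < delta < 1 -> IZR k <= LL eps delta ->
  pi_lin eps delta k * (exp eps + 1) <= 1 - delta.
Proof.
  intros He Hd Hk. pose proof (exp_gt1 eps He) as Ha.
  set (a := exp eps) in *.
  set (V := (a + 2 * delta - 1) / ((a + 1) * delta)).
  assert (HV : 0 < V). { unfold V. apply Rdiv_lt_0_compat; nra. }
  set (E := exp (IZR k * eps)).
  assert (HE : E <= V).
  { unfold E. rewrite <- (exp_ln V HV). apply exp_le.
    unfold LL in Hk. fold a in Hk. fold V in Hk.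
    replace (ln V) with ((1/eps * ln V) * eps) by (field; lra).
    apply Rmult_le_compat_r; lra. }
  assert (HEV : E * ((a + 1) * delta) <= a + 2 * delta - 1).
  { replace (a + 2 * delta - 1) with (V * ((a + 1) * delta)) by (unfold V; field; nra).
    apply Rmult_le_compat_r; nra. }
  unfold pi_lin. fold a. fold E.
  apply Rmult_le_reg_r with (a - 1); [lra|].
  replace ((E - 1) / (a - 1) * delta * (a + 1) * (a - 1)) with ((E - 1) * delta * (a + 1))
    by (field; lra).
  nra.
Qed.

Definition hh eps delta (m : Z) :=
  (1 - exp (- (IZR m * eps))) * (1 + delta / (exp eps - 1))
    + exp (- (IZR m * eps)) * pi_lin eps delta (n1 eps delta).

Lemma hh0 eps delta : hh eps delta 0 = pi_lin eps delta (n1 eps delta).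
Proof. unfold hh. rewrite Rmult_0_l, Ropp_0, exp_0. ring. Qed.

Lemma hh_succ eps delta m : 0 < eps ->
  hh eps delta (m + 1) = gf (exp eps) delta (hh eps delta m).
Proof.
  intros He. pose proof (exp_gt1 eps He). unfold hh, gf.
  rewrite plus_IZR, Rmult_plus_distr_r, Ropp_plus_distr, exp_plus, Rmult_1_l.
  rewrite (exp_Ropp eps).
  field. lra.
Qed.

Definition WW eps delta :=
  1 + (exp eps - 1) / delta * (1 - pi_lin eps delta (n1 eps delta)).
Definition MM eps delta := (1 / eps) * ln (WW eps delta).

Lemma hh_id eps delta m : 0 < eps -> 0 < delta < 1 ->
  1 - hh eps delta m = (WW eps delta - exp (IZR m * eps)) *
    (delta / ((exp eps - 1) * exp (IZR m * eps))).
Proof.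
  intros He Hd. pose proof (exp_gt1 eps He). pose proof (exp_pos (IZR m * eps)).
  unfold hh, WW. rewrite exp_Ropp. field. split; lra.
Qed.

Lemma hh_le1 eps delta m : 0 < eps -> 0 < delta < 1 -> 0 < WW eps delta ->
  IZR m <= MM eps delta -> hh eps delta m <= 1.
Proof.
  intros He Hd HW Hm. pose proof (exp_gt1 eps He). pose proof (exp_pos (IZR m * eps)).
  assert (HE : exp (IZR m * eps) <= WW eps delta).
  { rewrite <- (exp_ln _ HW). apply exp_le. unfold MM in Hm.
    replace (ln (WW eps delta)) with ((1/eps * ln (WW eps delta)) * eps) by (field; lra).
    apply Rmult_le_compat_r; lra. }
  assert (0 <= (WW eps delta - exp (IZR m * eps)) *
    (delta / ((exp eps - 1) * exp (IZR m * eps)))).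
  { apply Rmult_le_pos; [lra|]. apply Rlt_le, Rdiv_lt_0_compat; nra. }
  rewrite <- hh_id in H1; lra.
Qed.

Lemma hh_gt1 eps delta m : 0 < eps -> 0 < delta < 1 -> 0 < WW eps delta ->
  MM eps delta < IZR m -> 1 < hh eps delta m.
Proof.
  intros He Hd HW Hm. pose proof (exp_gt1 eps He). pose proof (exp_pos (IZR m * eps)).
  assert (HE : WW eps delta < exp (IZR m * eps)).
  { rewrite <- (exp_ln _ HW). apply exp_increasing. unfold MM in Hm.
    replace (ln (WW eps delta)) with ((1/eps * ln (WW eps delta)) * eps) by (field; lra).
    apply Rmult_lt_compat_r; lra. }
  assert (0 < (exp (IZR m * eps) - WW eps delta) *
    (delta / ((exp eps - 1) * exp (IZR m * eps)))).
  { apply Rmult_lt_0_compat; [lra|]. apply Rdiv_lt_0_compat; nra. }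
  assert (1 - hh eps delta m < 0).
  { rewrite hh_id by assumption. nra. }
  lra.
Qed.

Lemma hh_ge eps delta m : 0 < eps -> 0 < delta < 1 -> (0 <= m)%Z ->
  pi_lin eps delta (n1 eps delta) <= 1 ->
  pi_lin eps delta (n1 eps delta) <= hh eps delta m.
Proof.
  intros He Hd Hm Hp. pose proof (exp_gt1 eps He).
  assert (Hu : exp (- (IZR m * eps)) <= 1).
  { rewrite <- exp_0. apply exp_le. apply IZR_le in Hm. nra. }
  pose proof (exp_pos (- (IZR m * eps))).
  assert (0 < delta / (exp eps - 1)) by (apply Rdiv_lt_0_compat; lra).
  unfold hh. nra.
Qed.

Definition PZ eps delta (z : Z) :=
  if (z <=? n1 eps delta)%Z then pi_lin eps delta z
  else if (z <=? n2 eps delta)%Z then hh eps delta (z - n1 eps delta) else 1.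

Lemma pi_opt_PZ eps delta n : pi_opt eps delta n = PZ eps delta (Z.of_nat n).
Proof. reflexivity. Qed.

Lemma lin_thr_rev eps delta k : 0 < eps -> 0 < delta < 1 -> LL eps delta <= IZR k ->
  1 - delta <= pi_lin eps delta k * (exp eps + 1).
Proof.
  intros He Hd Hk. pose proof (exp_gt1 eps He) as Ha.
  set (a := exp eps) in *.
  set (V := (a + 2 * delta - 1) / ((a + 1) * delta)).
  assert (HV : 0 < V). { unfold V. apply Rdiv_lt_0_compat; nra. }
  set (E := exp (IZR k * eps)).
  assert (HE : V <= E).
  { unfold E. rewrite <- (exp_ln V HV). apply exp_le.
    unfold LL in Hk. fold a in Hk. fold V in Hk.
    replace (ln V) with ((1/eps * ln V) * eps) by (field; lra).
    apply Rmult_le_compat_r; lra. }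
  assert (HEV : a + 2 * delta - 1 <= E * ((a + 1) * delta)).
  { replace (a + 2 * delta - 1) with (V * ((a + 1) * delta)) by (unfold V; field; nra).
    apply Rmult_le_compat_r; nra. }
  unfold pi_lin. fold a. fold E.
  apply Rmult_le_reg_r with (a - 1); [lra|].
  replace ((E - 1) / (a - 1) * delta * (a + 1) * (a - 1)) with ((E - 1) * delta * (a + 1))
    by (field; lra).
  nra.
Qed.

Lemma n1_facts eps delta : 0 < eps -> 0 < delta < 1 ->
  IZR (n1 eps delta) - 1 <= LL eps delta < IZR (n1 eps delta) /\ (1 <= n1 eps delta)%Z.
Proof.
  intros He Hd. pose proof (exp_gt1 eps He) as Ha.
  destruct (base_Int_part (LL eps delta)) as [H1 H2].
  assert (HL : 0 <= LL eps delta).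
  { unfold LL. set (a := exp eps) in *.
    assert (1 <= (a + 2 * delta - 1) / ((a + 1) * delta)).
    { apply Rmult_le_reg_r with ((a + 1) * delta); [nra|].
      unfold Rdiv. rewrite Rmult_assoc, Rinv_l by nra. nra. }
    assert (0 <= ln ((a + 2 * delta - 1) / ((a + 1) * delta))).
    { destruct (Rle_dec 0 (ln ((a + 2 * delta - 1) / ((a + 1) * delta)))) as [|n]; auto.
      apply Rnot_le_lt in n. apply exp_increasing in n.
      rewrite exp_0, exp_ln in n by lra. lra. }
    apply Rmult_le_pos; [|lra]. apply Rlt_le, Rdiv_lt_0_compat; lra. }
  unfold n1. fold (LL eps delta). unfold floorZ.
  rewrite plus_IZR. split; [lra|].
  assert (-1 < Int_part (LL eps delta))%Z by (apply lt_IZR; lra). lia.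
Qed.

Lemma p1_facts eps delta : 0 < eps -> 0 < delta < 1 ->
  pi_lin eps delta (n1 eps delta) <= 1 /\
  1 - delta <= pi_lin eps delta (n1 eps delta) * (exp eps + 1).
Proof.
  intros He Hd. pose proof (exp_gt1 eps He) as Ha.
  destruct (n1_facts eps delta He Hd) as [[H1 H2] H3]. split.
  - replace (n1 eps delta) with ((n1 eps delta - 1) + 1)%Z by lia.
    rewrite lin_succ by lra.
    assert (Hp := lin_thr eps delta (n1 eps delta - 1) He Hd).
    rewrite minus_IZR in Hp. specialize (Hp H1).
    set (p := pi_lin eps delta (n1 eps delta - 1)) in *.
    destruct (Rle_dec 0 p); nra.
  - apply lin_thr_rev; lra.
Qed.

Lemma WW_ge1 eps delta : 0 < eps -> 0 < delta < 1 -> 1 <= WW eps delta.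
Proof.
  intros He Hd. pose proof (exp_gt1 eps He). destruct (p1_facts eps delta He Hd) as [H1 _].
  unfold WW. assert (0 <= (exp eps - 1) / delta) by (apply Rlt_le, Rdiv_lt_0_compat; lra).
  nra.
Qed.

Lemma n2_facts eps delta : 0 < eps -> 0 < delta < 1 ->
  IZR (n2 eps delta - n1 eps delta) <= MM eps delta < IZR (n2 eps delta - n1 eps delta) + 1
  /\ (n1 eps delta <= n2 eps delta)%Z.
Proof.
  intros He Hd. pose proof (WW_ge1 eps delta He Hd).
  destruct (base_Int_part (MM eps delta)) as [H1 H2].
  assert (HM : 0 <= MM eps delta).
  { unfold MM.
    assert (0 <= ln (WW eps delta)).
    { destruct (Rle_dec 0 (ln (WW eps delta))) as [|n]; auto.
      apply Rnot_le_lt in n. apply exp_increasing in n.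
      rewrite exp_0, exp_ln in n by lra. lra. }
    apply Rmult_le_pos; [|lra]. apply Rlt_le, Rdiv_lt_0_compat; lra. }
  unfold n2. fold (WW eps delta). fold (MM eps delta). unfold floorZ.
  replace (n1 eps delta + Int_part (MM eps delta) - n1 eps delta)%Z
    with (Int_part (MM eps delta)) by lia.
  split; [lra|].
  assert (-1 < Int_part (MM eps delta))%Z by (apply lt_IZR; lra). lia.
Qed.

Lemma PZ_rec eps delta z : 0 < eps -> 0 < delta < 1 -> (0 <= z)%Z ->
  PZ eps delta (z + 1) = ff (exp eps) delta (PZ eps delta z).
Proof.
  intros He Hd Hz. pose proof (exp_gt1 eps He) as Ha.
  destruct (n1_facts eps delta He Hd) as [[L1 L2] L3].
  destruct (p1_facts eps delta He Hd) as [P1 P2].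
  destruct (n2_facts eps delta He Hd) as [[M1 M2] M3].
  pose proof (WW_ge1 eps delta He Hd) as W1.
  assert (Hhz : (n1 eps delta <= z)%Z -> (z <= n2 eps delta)%Z ->
     PZ eps delta z = hh eps delta (z - n1 eps delta)).
  { intros A B. unfold PZ.
    destruct (Z.leb_spec z (n1 eps delta)).
    - replace z with (n1 eps delta) by lia. rewrite Z.sub_diag, hh0. reflexivity.
    - destruct (Z.leb_spec z (n2 eps delta)); [reflexivity|lia]. }
  assert (Hthr : forall m, (0 <= m)%Z ->
     1 - delta <= hh eps delta m * (exp eps + 1)).
  { intros m Hm. pose proof (hh_ge eps delta m He Hd Hm P1). nra. }
  destruct (Z.leb_spec (z + 1) (n1 eps delta)).
  - unfold PZ. rewrite (proj2 (Z.leb_le _ _) H).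
    rewrite (proj2 (Z.leb_le z (n1 eps delta))) by lia.
    rewrite lin_succ by lra. symmetry. apply ff_lin; try lra.
    apply lin_thr; try lra. apply IZR_le in H. rewrite plus_IZR in H. lra.
  - destruct (Z.leb_spec (z + 1) (n2 eps delta)).
    + assert (E1 : PZ eps delta (z + 1) = hh eps delta (z + 1 - n1 eps delta)).
      { unfold PZ. rewrite (proj2 (Z.leb_gt _ _) H), (proj2 (Z.leb_le _ _) H0).
        reflexivity. }
      rewrite E1, Hhz by lia.
      replace (z + 1 - n1 eps delta)%Z with ((z - n1 eps delta) + 1)%Z by lia.
      rewrite hh_succ by lra. symmetry. apply ff_g; try lra.
      * apply Hthr. lia.
      * rewrite <- hh_succ by lra. apply hh_le1; try lra.
        assert (IZR (z - n1 eps delta + 1) <= IZR (n2 eps delta - n1 eps delta))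
          by (apply IZR_le; lia). lra.
    + assert (E1 : PZ eps delta (z + 1) = 1).
      { unfold PZ. rewrite (proj2 (Z.leb_gt _ _) H), (proj2 (Z.leb_gt _ _) H0).
        reflexivity. }
      rewrite E1.
      destruct (Z.leb_spec z (n2 eps delta)).
      * rewrite Hhz by lia. symmetry. apply ff_1; try lra.
        -- apply Hthr. lia.
        -- rewrite <- hh_succ by lra. apply Rlt_le, hh_gt1; try lra.
           assert (IZR (n2 eps delta - n1 eps delta + 1) <= IZR (z - n1 eps delta + 1))
             by (apply IZR_le; lia).
           rewrite plus_IZR in H2. lra.
      * unfold PZ. rewrite (proj2 (Z.leb_gt z (n1 eps delta))) by lia.
        rewrite (proj2 (Z.leb_gt _ _) H1). symmetry. apply ff_1; try lra.
        unfold gf. replace (1 - 1 - delta) with (- delta) by ring.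
        assert (0 < delta / exp eps) by (apply Rdiv_lt_0_compat; lra).
        unfold Rdiv in *. rewrite Ropp_mult_distr_l_reverse. lra.
Qed.

Lemma pi_rec eps delta n : 0 < eps -> 0 < delta < 1 ->
  pi_opt eps delta (S n) = ff (exp eps) delta (pi_opt eps delta n).
Proof.
  intros. rewrite !pi_opt_PZ, Nat2Z.inj_succ, <- Z.add_1_r.
  apply PZ_rec; auto. lia.
Qed.

Lemma ff_le_lin a d p : ff a d p <= a * p + d.
Proof. unfold ff. pose proof (Rmin_l (Rmin (a*p+d) (gf a d p)) 1).
  pose proof (Rmin_l (a*p+d) (gf a d p)). lra. Qed.
Lemma ff_le_g a d p : ff a d p <= gf a d p.
Proof. unfold ff. pose proof (Rmin_l (Rmin (a*p+d) (gf a d p)) 1).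
  pose proof (Rmin_r (a*p+d) (gf a d p)). lra. Qed.
Lemma ff_le_1 a d p : ff a d p <= 1.
Proof. unfold ff. apply Rmin_r. Qed.

Lemma ff_ge a d p : 1 < a -> 0 < d < 1 -> 0 <= p <= 1 -> p <= ff a d p.
Proof.
  intros Ha Hd Hp. unfold ff, gf. apply Rmin_glb; [apply Rmin_glb|]; try nra.
  apply Rmult_le_reg_r with a; [lra|].
  replace ((1 - (1 - p - d) / a) * a) with (a - 1 + p + d) by (field; lra). nra.
Qed.

Lemma ff_mono a d p q : 0 < a -> p <= q -> ff a d p <= ff a d q.
Proof.
  intros Ha Hpq. unfold ff.
  assert (gf a d p <= gf a d q).
  { unfold gf. unfold Rdiv. assert (0 < / a) by (apply Rinv_0_lt_compat; lra). nra. }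
  apply Rmin_glb; [|apply Rmin_r]. apply Rmin_glb.
  - pose proof (Rmin_l (Rmin (a*p+d) (gf a d p)) 1).
    pose proof (Rmin_l (a*p+d) (gf a d p)). nra.
  - pose proof (Rmin_l (Rmin (a*p+d) (gf a d p)) 1).
    pose proof (Rmin_r (a*p+d) (gf a d p)). lra.
Qed.

Theorem theorem1 (eps delta : R) (Heps : 0 < eps) (Hdelta : 0 < delta < 1) :
  is_optimal eps delta (pi_opt eps delta).
Proof.
  pose proof (exp_gt1 eps Heps) as Ha. set (a := exp eps) in *.
  assert (P0 : pi_opt eps delta 0 = 0).
  { rewrite pi_opt_PZ. unfold PZ.
    destruct (n1_facts eps delta Heps Hdelta) as [_ H].
    rewrite (proj2 (Z.leb_le _ _)) by (simpl; lia).
    unfold pi_lin. rewrite Rmult_0_l, exp_0. unfold Rdiv. ring. }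
  assert (B : forall n, 0 <= pi_opt eps delta n <= 1).
  { induction n.
    - rewrite P0; lra.
    - rewrite pi_rec by assumption. fold a. split.
      + pose proof (ff_ge a delta (pi_opt eps delta n) Ha Hdelta IHn). lra.
      + apply ff_le_1. }
  assert (Mo : forall n, pi_opt eps delta n <= pi_opt eps delta (S n)).
  { intro n. rewrite pi_rec by assumption. apply ff_ge; auto. }
  assert (Up : forall n, pi_opt eps delta (S n) <= a * pi_opt eps delta n + delta).
  { intro n. rewrite pi_rec by assumption. apply ff_le_lin. }
  assert (Dn : forall n, 1 - pi_opt eps delta n <= a * (1 - pi_opt eps delta (S n)) + delta).
  { intro n. assert (G : pi_opt eps delta (S n) <= gf a delta (pi_opt eps delta n))
      by (rewrite pi_rec by assumption; apply ff_le_g). unfold gf in G.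
    apply Rmult_le_compat_l with (r := a) in G; [|lra].
    replace (a * (1 - (1 - pi_opt eps delta n - delta) / a))
      with (a - 1 + pi_opt eps delta n + delta) in G by (field; lra).
    nra. }
  split; [split; [exact P0 | exact B]|split].
  - intros n n' Hn S.
    unfold prob_in. fold a. destruct Hn as [-> | ->].
    + pose proof (B n). pose proof (B (Datatypes.S n)). pose proof (Mo n). pose proof (Dn n).
      destruct (S keep), (S drop); nra.
    + pose proof (B n'). pose proof (B (Datatypes.S n')). pose proof (Mo n').
      pose proof (Up n').
      destruct (S keep), (S drop); nra.
  - intros pi [Hp0 Hpb] Hdp n. induction n.
    + rewrite Hp0, P0. lra.
    + rewrite pi_rec by assumption. fold a.
      apply Rle_trans with (ff a delta (pi n)); [|apply ff_mono; lra].
      unfold ff. apply Rmin_glb; [apply Rmin_glb|apply Hpb].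
      * pose proof (Hdp (Datatypes.S n) n (or_intror eq_refl) (fun o => match o with keep => true | drop => false end)) as H.
        unfold prob_in in H. simpl in H. fold a in H. lra.
      * pose proof (Hdp n (Datatypes.S n) (or_introl eq_refl) (fun o => match o with keep => false | drop => true end)) as H.
        unfold prob_in in H. simpl in H. fold a in H. unfold gf.
        apply Rmult_le_reg_r with a; [lra|].
        replace ((1 - (1 - pi n - delta) / a) * a) with (a - 1 + pi n + delta) by (field; lra).
        nra.
Qed.
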